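(* There is a sufficiently small $\epsilon>0$ such that, for each combinatorial line $L$ of $\mathrm{HJ}(d,n)$, the affine function $g^\epsilon_L$ vanishes on $\nu(P^\epsilon_L)$ and is positive on $\nu(P^\epsilon\setminus P^\epsilon_L)$.
   Context: Combinatorial lines and $\mathrm{HJ}(d,n)$: for $\tau\in([d]\cup\{*\})^n\setminus[d]^n$ and $k\in\mathbb{R}$, $\sigma(\tau,k)$ is $\tau$ with every $*$ replaced by $k$; $L_\tau=\{\sigma(\tau,k):k\in[d]\}$, and $\mathrm{HJ}(d,n)$ is the hypergraph on $[d]^n$ of all combinatorial lines. Vectors $v_1,\dots,v_n\in\mathbb{R}^2$ have positive $x$-components; $p_\sigma=\sum_i\sigma_iv_i$; $P=\{p_\sigma:\sigma\in[d]^n\}$ consists of distinct points; for a line $L$, $P_L=\{p_\sigma:\sigma\in L\}$ spans the line $S_L: y=a_Lx+b_L$, and it is assumed that $S_L\cap P=P_L$ for every line $L$. $\nu(x,y)=(x^2,xy,y^2,x,y)$. For $\epsilon>0$, $\phi_\epsilon(x,y)=(x,y+\sqrt{\epsilon x})$, $P^\epsilon=\phi_\epsilon(P)$, $P^\epsilon_L=\phi_\epsilon(P_L)$, $f^\epsilon_L(x,y)=(y-a_Lx-b_L)^2-\epsilon x$, and $g^\epsilon_L:\mathbb{R}^5\to\mathbb{R}$ is the affine function with $g^\epsilon_L(x^2,xy,y^2,x,y)=f^\epsilon_L(x,y)$. *)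

(* Defs.v *)
From HB Require Import structures.
From mathcomp Require Import all_boot all_order all_algebra.
From mathcomp Require Import reals.
Set Implicit Arguments. Unset Strict Implicit. Unset Printing Implicit Defensive.
Import Order.TTheory GRing.Theory Num.Theory.
Local Open Scope ring_scope.

(* [d] = {1,...,d} is encoded by 'I_d (the ordinal i stands for i+1).
   Words sigma in [d]^n : {ffun 'I_n -> 'I_d}.
   Templates tau in ([d] U {*})^n : {ffun 'I_n -> option 'I_d}, None = *. *)

Definition word (d n : nat) := {ffun 'I_n -> 'I_d}.
Definition template (d n : nat) := {ffun 'I_n -> option 'I_d}.

Definition is_template d n (tau : template d n) : bool :=
  [exists i, tau i == None].

Definition subst_star d n (tau : template d n) (k : 'I_d) : word d n :=
  [ffun i => odflt k (tau i)].

Definition in_line d n (tau : template d n) (s : word d n) : Prop :=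
  exists k : 'I_d, s = subst_star tau k.

Definition letter (R : pzRingType) d (i : 'I_d) : R := (i.+1)%:R.

Definition pt (R : realType) d n (v : 'I_n -> R * R) (s : word d n) : R * R :=
  (\sum_(i < n) letter R (s i) * (v i).1, \sum_(i < n) letter R (s i) * (v i).2).

Definition phi (R : realType) (eps : R) (p : R * R) : R * R :=
  (p.1, p.2 + Num.sqrt (eps * p.1)).

Definition nu (R : realType) (p : R * R) : 'rV[R]_5 :=
  \row_(j < 5) [:: p.1 ^+ 2; p.1 * p.2; p.2 ^+ 2; p.1; p.2]`_j.

Definition f_eps (R : realType) (a b eps : R) (p : R * R) : R :=
  (p.2 - a * p.1 - b) ^+ 2 - eps * p.1.

(* g^eps_L : the affine function on R^5 with g(nu(x,y)) = f^eps_L(x,y):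
   (y - a x - b)^2 - eps x
     = a^2 x^2 - 2a xy + y^2 + (2ab - eps) x - 2b y + b^2 *)
Definition g_eps (R : realType) (a b eps : R) (z : 'rV[R]_5) : R :=
  a ^+ 2 * z ord0 0 - 2 * a * z ord0 1 + z ord0 2
  + (2 * a * b - eps) * z ord0 3 - 2 * b * z ord0 4 + b ^+ 2.

(* Main.v *)
Require Import Defs.
From HB Require Import structures.
From mathcomp Require Import all_boot all_order all_algebra.
From mathcomp Require Import reals.
From mathcomp Require Import ring lra.
Import Order.TTheory GRing.Theory Num.Theory.
Local Open Scope ring_scope.

Lemma g_nu (R : realType) (a b eps : R) (p : R * R) :
  g_eps a b eps (nu p) = f_eps a b eps p.
Proof. rewrite /g_eps /nu /f_eps !mxE /=. ring. Qed.

Lemma le_sum_term (R : realType) (I : finType) (F : I -> R) (i : I) :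
  (forall j, 0 <= F j) -> F i <= \sum_j F j.
Proof.
move=> H; rewrite (bigD1 i) //= lerDl; exact: sumr_ge0.
Qed.

Lemma key_ineq (R : realType) (dl r : R) :
  0 <= r -> 4 * r ^+ 2 < dl ^+ 2 -> 0 < (dl + r) ^+ 2 - r ^+ 2.
Proof.
move=> hr h.
have -> : (dl + r) ^+ 2 - r ^+ 2 = dl * (dl + 2 * r) by ring.
case: (ltrgt0P dl) => hd.
- apply: mulr_gt0 => //; lra.
- have : dl + 2 * r < 0 by nra.
  move=> h2; rewrite -[X in 0 < X]opprK -mulrN -mulNr. apply: mulr_gt0; lra.
- subst dl; move: h; nra.
Qed.

Theorem lemma2p6 (R : realType) (d n : nat) (v : 'I_n -> R * R)
  (a b : template d n -> R)
  (hv : forall i, 0 < (v i).1)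
  (hdistinct : injective (@pt R d n v))
  (hS : forall tau : template d n, is_template tau ->
          forall s : word d n,
            (pt v s).2 = a tau * (pt v s).1 + b tau <-> in_line tau s) :
  exists eps : R, 0 < eps /\
    forall tau : template d n, is_template tau ->
      (forall s : word d n, in_line tau s ->
         g_eps (a tau) (b tau) eps (nu (phi eps (pt v s))) = 0) /\
      (forall s : word d n,
         (forall s' : word d n, in_line tau s' ->
            phi eps (pt v s) <> phi eps (pt v s')) ->
         0 < g_eps (a tau) (b tau) eps (nu (phi eps (pt v s)))).
Proof.
pose dl (tau : template d n) (s : word d n) : R := (pt v s).2 - a tau * (pt v s).1 - b tau.
pose T (ts : template d n * word d n) :=
  4 * `|(pt v ts.2).1| / (dl ts.1 ts.2) ^+ 2.
have T0 : forall ts, 0 <= T ts.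
  by move=> ts; rewrite /T; apply: divr_ge0; [apply: mulr_ge0 => //| apply: sqr_ge0].
pose S := \sum_ts T ts.
have S0 : 0 <= S by apply: sumr_ge0.
exists (1 / (1 + S)).
have epos : 0 < 1 / (1 + S) by apply: divr_gt0 => //; lra.
split => // tau htau.
have xpos : forall s : word d n, 0 < (pt v s).1.
  move=> s; case/existsP: htau => i _.
  rewrite /pt /= (bigD1 i) //=; apply: ltr_pwDl.
    apply: mulr_gt0 => //; by rewrite /letter ltr0n.
  apply: sumr_ge0 => j _; apply: mulr_ge0 => //; last exact: ltW.
split.
- move=> s hs; rewrite g_nu /f_eps /phi.
  have := (proj2 (hS tau htau s) hs); have := xpos s.
  case: (pt v s) => x y /= hx ->.
  set r := Num.sqrt _.
  have -> : a tau * x + b tau + r - a tau * x - b tau = r by ring.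
  rewrite sqr_sqrtr ?subrr //.
  by apply: mulr_ge0; [exact: ltW | exact: ltW].
- move=> s hs.
  have hnl : ~ in_line tau s by move=> hl; exact: (hs s hl).
  have hd : dl tau s != 0.
    apply/eqP => h; apply: hnl; apply/(hS tau htau); move: h; rewrite /dl; lra.
  rewrite g_nu /f_eps /phi.
  have xp : 0 < (pt v s).1 := xpos s.
  move: hd; rewrite /dl.
  case E: (pt v s) xp => [x y] /= xp hd.
  set r := Num.sqrt _.
  have er : r ^+ 2 = 1 / (1 + S) * x.
    by rewrite /r sqr_sqrtr //; apply: mulr_ge0; exact: ltW.
  have -> : y + r - a tau * x - b tau = (y - a tau * x - b tau) + r by ring.
  rewrite -er; apply: key_ineq; first exact: sqrtr_ge0.
  rewrite er.
  have hT : 4 * `|(pt v s).1| / (dl tau s) ^+ 2 <= S := @le_sum_term _ _ T (tau, s) T0.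
  have d2 : 0 < (y - a tau * x - b tau) ^+ 2 by rewrite exprn_even_gt0.
  move: hT; rewrite /dl E /= ger0_norm; last exact: ltW.
  rewrite ler_pdivrMr // => hT.
  rewrite mulrA -mulrA [_ * x]mulrC mulrA mul1r ltr_pdivrMr; last lra.
  nra.
Qed.
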